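(* Let $(B,\lfloor\cdot,\cdot\rfloor)$ be an SSD space with quadratic form $q$ and let $A\subset B$ be $q$-positive. Then $\operatorname{conv}A\subset \operatorname{dom}\Phi_A^{@}\subset \operatorname{conv}^w A$.
   Context: An SSD space is a pair $(B,\lfloor\cdot,\cdot\rfloor)$ with $B$ a nonzero real vector space and $\lfloor\cdot,\cdot\rfloor$ a symmetric bilinear form; $q(b)=\frac12\lfloor b,b\rfloor$. $w(B,B)$ is the coarsest topology on $B$ making all maps $b\mapsto\lfloor b,c\rfloor$ continuous, and $\operatorname{conv}^w A$ is the $w(B,B)$-closure of the convex hull $\operatorname{conv}A$. A nonempty $A\subset B$ is $q$-positive if $q(b-c)\ge0$ for all $b,c\in A$. $\Phi_A(x)=\sup_{a\in A}\{\lfloor x,a\rfloor-q(a)\}$; $\Phi_A^{@}(b)=\sup_{c\in B}\{\lfloor c,b\rfloor-\Phi_A(c)\}$; $\operatorname{dom}g=\{x: g(x)<+\infty\}$. *)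

(* Defs.v *)
From HB Require Import structures.
From mathcomp Require Import all_boot all_order all_algebra.
From mathcomp Require Import all_classical all_reals all_analysis.
Set Implicit Arguments. Unset Strict Implicit. Unset Printing Implicit Defensive.
Import Order.TTheory GRing.Theory Num.Theory.
Import numFieldNormedType.Exports.
Local Open Scope classical_set_scope.
Local Open Scope ring_scope.

Section SSD.
Variables (R : realType) (B : lmodType R) (bf : B -> B -> R).

Definition symmetric_bilinear : Prop :=
  (forall b c, bf b c = bf c b) /\
  (forall a b1 b2 c, bf (a *: b1 + b2) c = a * bf b1 c + bf b2 c).

Definition qf (b : B) : R := bf b b / 2.

Definition q_positive (A : set B) : Prop :=
  A !=set0 /\ (forall b c, A b -> A c -> 0 <= qf (b - c)).

Definition conv_hull (A : set B) : set B :=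
  [set x | exists (n : nat) (a : 'I_n -> B) (l : 'I_n -> R),
      (forall i, A (a i)) /\ (forall i, 0 <= l i) /\
      \sum_(i < n) l i = 1 /\ x = \sum_(i < n) l i *: a i].

(* w(B,B): the coarsest topology making all maps b |-> [b,c] continuous,
   i.e. the topology generated by preimages of open sets of R. *)
Definition is_topology (tau : set (set B)) : Prop :=
  tau setT /\
  (forall U V, tau U -> tau V -> tau (U `&` V)) /\
  (forall (F : set (set B)), F `<=` tau -> tau (\bigcup_(U in F) U)).

Definition w_subbasis (U : set B) : Prop :=
  exists (c : B) (O : set R), @open R^o O /\ U = (fun b => bf b c) @^-1` O.

Definition w_open (U : set B) : Prop :=
  forall tau, is_topology tau -> w_subbasis `<=` tau -> tau U.

Definition w_closure (S : set B) : set B :=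
  [set x | forall U, w_open U -> U x -> (S `&` U) !=set0].

Definition convw (A : set B) : set B := w_closure (conv_hull A).

Local Open Scope ereal_scope.

Definition PhiA (A : set B) (x : B) : \bar R :=
  ereal_sup [set (bf x a - qf a)%:E | a in A].

Definition PhiA_at (A : set B) (b : B) : \bar R :=
  ereal_sup [set (bf c b)%:E - PhiA A c | c in [set: B]].

Definition edom (g : B -> \bar R) : set B := [set x | g x < +oo].

End SSD.

(* Main.v *)
Require Import Defs.
From HB Require Import structures.
From mathcomp Require Import all_boot all_order all_algebra.
From mathcomp Require Import all_classical all_reals all_analysis.
From mathcomp Require Import ring lra.
Import Order.TTheory GRing.Theory Num.Theory.
Set Implicit Arguments. Unset Strict Implicit. Unset Printing Implicit Defensive.
Local Open Scope classical_set_scope.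
Local Open Scope ring_scope.
Import numFieldNormedType.Exports.
Section Bil.
Variables (R : realType) (B : lmodType R) (bf : B -> B -> R).
Hypothesis hbf : symmetric_bilinear bf.

Lemma bfDl x y z : bf (x + y) z = bf x z + bf y z.
Proof. by have := (proj2 hbf) 1 x y z; rewrite scale1r mul1r. Qed.
Lemma bf0l z : bf 0 z = 0.
Proof. by have := bfDl 0 0 z; rewrite addr0 => /eqP; rewrite -subr_eq subrr eq_sym => /eqP. Qed.
Lemma bfZl a x z : bf (a *: x) z = a * bf x z.
Proof. by have := (proj2 hbf) a x 0 z; rewrite addr0 bf0l addr0. Qed.
Lemma bfNl x z : bf (- x) z = - bf x z.
Proof. by rewrite -scaleN1r bfZl mulN1r. Qed.
Lemma bfBl x y z : bf (x - y) z = bf x z - bf y z.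
Proof. by rewrite bfDl bfNl. Qed.
Lemma bfC x y : bf x y = bf y x.
Proof. exact: (proj1 hbf). Qed.
Lemma bfDr x y z : bf z (x + y) = bf z x + bf z y.
Proof. by rewrite !(bfC z) bfDl. Qed.
Lemma bfZr a x z : bf z (a *: x) = a * bf z x.
Proof. by rewrite !(bfC z) bfZl. Qed.
Lemma bfBr x y z : bf z (x - y) = bf z x - bf z y.
Proof. by rewrite !(bfC z) bfBl. Qed.
Lemma bf_suml n (l : 'I_n -> R) (a : 'I_n -> B) z :
  bf (\sum_(i < n) l i *: a i) z = \sum_(i < n) l i * bf (a i) z.
Proof.
elim: n l a => [|n IH] l a; first by rewrite !big_ord0 bf0l.
by rewrite !big_ord_recr /= bfDl IH bfZl.
Qed.
Lemma bf_sumr n (l : 'I_n -> R) (a : 'I_n -> B) z :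
  bf z (\sum_(i < n) l i *: a i) = \sum_(i < n) l i * bf z (a i).
Proof. by rewrite bfC bf_suml; apply: eq_bigr => i _; rewrite bfC. Qed.

Lemma qfB x y : qf bf (x - y) = qf bf x - bf x y + qf bf y.
Proof.
rewrite /qf bfBl !bfBr (bfC y x).
by rewrite mulrBl mulrDl; field.
Qed.
End Bil.
Section Part1.
Variables (R : realType) (B : lmodType R) (bf : B -> B -> R).
Hypothesis hbf : symmetric_bilinear bf.

Lemma part1 (A : set B) : conv_hull A `<=` edom (PhiA_at bf A).
Proof.
move=> x [n [a [l [Aa [l0 [l1 ->]]]]]].
rewrite /edom /PhiA_at /=.
apply: (@le_lt_trans _ _ (\sum_(i < n) l i * qf bf (a i))%:E); last by rewrite ltry.
apply: ge_ereal_sup => _ [c _ <-].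
have hub i : ((bf c (a i) - qf bf (a i))%:E <= PhiA bf A c)%E.
  by apply: ereal_sup_ubound; exists (a i).
case E: (PhiA bf A c) => [r| |].
- rewrite -EFinD lee_fin bf_sumr //.
  have hr i : bf c (a i) <= r + qf bf (a i).
    by have := hub i; rewrite E lee_fin => ?; lra.
  apply: (@le_trans _ _ (\sum_(i < n) l i * (r + qf bf (a i)) - r)).
    rewrite lerD2r; apply: ler_sum => i _; exact: ler_wpM2l.
  under eq_bigr do rewrite mulrDr.
  rewrite big_split /= -mulr_suml l1 mul1r; lra.
- by rewrite /= leNye.
- case: n a l Aa l0 l1 hub => [|n] a l Aa l0 l1 hub.
    by move: l1; rewrite big_ord0 => /eqP; rewrite eq_sym oner_eq0.
  by have := hub ord0; rewrite E.
Qed.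
End Part1.
Section Dual.
Variables (R : realType) (B : lmodType R) (bf : B -> B -> R).
Hypothesis hbf : symmetric_bilinear bf.
Local Open Scope ereal_scope.

Lemma dual_cond (A : set B) (hA : q_positive bf A) b :
  PhiA_at bf A b < +oo -> forall e (eta : R), (0 < eta)%R ->
  exists a, A a /\ (bf b e - eta <= bf a e)%R.
Proof.
move=> hb e eta eta0.
have [M hM] : exists M : R, PhiA_at bf A b <= M%:E.
  move: hb; case: (PhiA_at bf A b) => [r _| //|_]; [exists r | exists 0%R]; by rewrite ?leNye ?lexx.
have hc c : (bf c b)%:E - PhiA bf A c <= M%:E.
  by apply: le_trans hM; apply: ereal_sup_ubound; exists c.
have hc' c : exists a, A a /\ (bf c b - M - 1 < bf c a - qf bf a)%R.
  have : ((bf c b - M - 1)%:E < PhiA bf A c).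
    have := hc c; case: (PhiA bf A c) => [r| |] /=.
    - by rewrite -EFinD !lee_fin lte_fin => ?; lra.
    - by rewrite ltry.
    - by rewrite addey // leye_eq.
  move=> h; have [_ [a Aa <-]] := ereal_sup_gt h; rewrite lte_fin => ?; by exists a.
case: hA => [[a0 Aa0] hpos].
pose K := (qf bf a0 - bf a0 b + M + 1)%R.
pose lam := ((`|K| + 1) / eta)%R.
have lam0 : (0 < lam)%R by rewrite /lam divr_gt0 // ltr_wpDl.
have lameta : (lam * eta = `|K| + 1)%R by rewrite /lam mulfVK // gt_eqF.
have [a [Aa ha]] := hc' (a0 + lam *: e)%R.
exists a; split => //.
move: ha; rewrite (bfC hbf (a0 + lam *: e)%R b) (bfC hbf (a0 + lam *: e)%R a).
rewrite !(bfDr hbf) !(bfZr hbf) (bfC hbf b a0) (bfC hbf a a0) => ha.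
have hq := hpos a a0 Aa Aa0; rewrite (qfB hbf) (bfC hbf a a0) in hq.
have hK : (K <= `|K|)%R by exact: ler_norm.
have : (lam * (bf b e - bf a e) < `|K|)%R by rewrite /K in hK *; lra.
move=> h; rewrite lerBlDr -lerBlDl.
rewrite leNgt; apply/negP => hgt.
have : (lam * eta < lam * (bf b e - bf a e))%R by rewrite ltr_pM2l.
lra.
Qed.
End Dual.
Section Topo.
Variables (R : realType) (B : lmodType R) (bf : B -> B -> R).

Definition wnb (U : set B) : Prop := forall x, U x ->
  exists (cs : seq B) (eps : R), 0 < eps /\
    [set y | forall c, c \in cs -> `|bf y c - bf x c| < eps] `<=` U.

Lemma wnb_top : is_topology wnb.
Proof.
split; [|split].
- move=> x _; exists [::], 1; split => //.
- move=> U V hU hV x [Ux Vx].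
  have [cs1 [e1 [e10 h1]]] := hU x Ux.
  have [cs2 [e2 [e20 h2]]] := hV x Vx.
  exists (cs1 ++ cs2), (Num.min e1 e2); split; first by rewrite lt_min e10 e20.
  move=> y hy; split.
  + apply: h1 => c cin; apply: (lt_le_trans (hy c _)); first by rewrite mem_cat cin.
    by rewrite ge_min lexx.
  + apply: h2 => c cin; apply: (lt_le_trans (hy c _)); first by rewrite mem_cat cin orbT.
    by rewrite ge_min lexx orbT.
- move=> F hF x [U FU Ux].
  have [cs [e [e0 h]]] := hF U FU x Ux.
  exists cs, e; split => // y /h Uy; by exists U.
Qed.

Lemma sub_wnb : w_subbasis bf `<=` wnb.
Proof.
move=> U [c [Op [oO ->]]] x /= Ox.
have : nbhs (bf x c : R^o) Op by rewrite openE in oO; exact: oO.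
move=> /nbhs_ballP [e /= e0 he].
exists [:: c], e; split => // y hy /=.
apply: he => /=.
by rewrite /ball /= distrC; apply: hy; rewrite mem_seq1.
Qed.

Lemma w_open_wnb U : w_open bf U -> wnb U.
Proof. by move=> h; apply: h; [exact: wnb_top | exact: sub_wnb]. Qed.
End Topo.
Section Sep.
Variables (R : realType) (n : nat).
Definition sqd (p y : 'rV[R]_n) : R := \sum_(j < n) (y ord0 j - p ord0 j) ^+ 2.
Lemma sqd_cont p : continuous (sqd p).
Proof.
have hc j : continuous (fun y : 'rV[R]_n => y ord0 j - p ord0 j).
  move=> y; exact: (cvgB (@coord_continuous R 1 n ord0 j y) (cvg_cst (p ord0 j))).
have hg j : continuous (fun y : 'rV[R]_n => (y ord0 j - p ord0 j) ^+ 2).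
  move=> y; under eq_fun do rewrite expr2.
  exact: (cvgM (hc j y) (hc j y)).
rewrite /sqd; elim: (index_enum _) => [|j s IH].
  have -> : (fun y : 'rV[R]_n => \sum_(j0 <- [::]) (y ord0 j0 - p ord0 j0) ^+ 2) = (fun=> 0).
    by apply/funext => z; rewrite big_nil.
  exact: cst_continuous.
have -> : (fun y : 'rV[R]_n => \sum_(j0 <- j :: s) (y ord0 j0 - p ord0 j0) ^+ 2) =
  (fun y : 'rV[R]_n => (y ord0 j - p ord0 j) ^+ 2) + (fun y : 'rV[R]_n => \sum_(j0 <- s) (y ord0 j0 - p ord0 j0) ^+ 2).
  by apply/funext => z; rewrite big_cons.
by move=> y; apply: continuousD; [exact: hg | exact: IH].
Qed.

Lemma sep (K S : set 'rV[R]_n) (p y0 : 'rV[R]_n) :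
  K y0 ->
  (forall u y t, K u -> S y -> 0 <= t <= 1 -> K ((1 - t) *: u + t *: y)) ->
  (forall (v : 'rV[R]_n) (eta : R), 0 < eta -> exists y, S y /\
      \sum_(j < n) v ord0 j * (y ord0 j - p ord0 j) <= eta) ->
  forall eps : R, 0 < eps -> exists y, K y /\ forall j, `|y ord0 j - p ord0 j| < eps.
Proof.
move=> Ky0 hext hdual eps eps0.
apply: contrapT => hno.
have hno' : forall y, K y -> exists j, eps <= `|y ord0 j - p ord0 j|.
  move=> y Ky; apply: contrapT => h; apply: hno; exists y; split => // j.
  by rewrite ltNge; apply/negP => hj; apply: h; exists j.
pose f := sqd p.
pose M := \sum_(j < n) `|p ord0 j| + f y0 + 1.
pose C := closure K `&` [set y | f y <= f y0].
have Ccl : closed C.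
  apply: closedI; first exact: closed_closure.
  apply: (@preimage_closed _ _ f [set x : R | x <= f y0]); [move=> y _; exact: sqd_cont | exact: closed_le].
have hsq : forall (y : 'rV[R]_n) j, (y ord0 j - p ord0 j)^+2 <= f y.
  move=> y j; rewrite /f /sqd (bigD1 j) //= lerDl.
  by apply: sumr_ge0 => i _; exact: sqr_ge0.
have hp : forall j, `|p ord0 j| <= \sum_(j < n) `|p ord0 j|.
  move=> j; rewrite (bigD1 j) //= lerDl.
  by apply: sumr_ge0 => i _; exact: normr_ge0.
have Cbox : C `<=` [set v : 'rV[R]_n | forall i, (`[- M, M]%classic : set R) (v ord0 i)].
  move=> v [_ /= fv] i /=; rewrite in_itv /= -ler_norml.
  have h1 := hsq v i; have h2 := hp i.
  have hd : (v ord0 i - p ord0 i)^+2 = `|v ord0 i - p ord0 i|^+2 by rewrite real_normK // num_real.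
  have hn : 0 <= `|v ord0 i - p ord0 i| by exact: normr_ge0.
  have hd1 : `|v ord0 i - p ord0 i| <= (v ord0 i - p ord0 i)^+2 + 1.
    rewrite hd; nra.
  have hv : `|v ord0 i| <= `|v ord0 i - p ord0 i| + `|p ord0 i|.
    by rewrite -[X in `|X|](subrK (p ord0 i)) ler_normD.
  rewrite /M; lra.
have Ccomp : compact C.
  apply: (subclosed_compact Ccl _ Cbox).
  exact: (@rV_compact _ n (fun=> `[- M, M]%classic) (fun=> @segment_compact R (- M) M)).
have C0 : C !=set0 by exists y0; split; [exact: subset_closure | exact: lexx].
have [z zC zmin] := EVT_min_rV C0 Ccomp (continuous_subspaceT (@sqd_cont p)).
rewrite inE in zC.
have zmin' : forall y, C y -> f z <= f y by move=> y Cy; apply: zmin; rewrite inE.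
have hseg : forall y t, S y -> 0 < t <= 1 -> f z <= f ((1 - t) *: z + t *: y).
  move=> y t Sy /andP[t0 t1].
  have inK : closure K ((1 - t) *: z + t *: y).
    move=> N hN.
    have hcont : continuous (fun u : 'rV[R]_n => (1 - t) *: u + t *: y).
      move=> u; exact: (cvgD (cvgZ (cvg_cst (1 - t)) cvg_id) (cvg_cst (t *: y))).
    have := hcont z N hN.
    move/(proj1 zC) => [u [Ku Nu]].
    exists ((1 - t) *: u + t *: y); split => //; apply: hext => //.
    by rewrite (ltW t0) t1.
  have [hle|hgt] := leP (f ((1 - t) *: z + t *: y)) (f y0).
  - by apply: zmin'; split.
  - apply: le_trans (ltW hgt); exact: (proj2 zC).
have hexp : forall y t, f ((1 - t) *: z + t *: y) = f z +
    2 * t * \sum_(j < n) (z ord0 j - p ord0 j) * (y ord0 j - z ord0 j) +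
    t ^+ 2 * \sum_(j < n) (y ord0 j - z ord0 j) ^+ 2.
  move=> y t; rewrite /f /sqd !mulr_sumr -!big_split /=; apply: eq_bigr => j _.
  rewrite !mxE; ring.
have hB : forall y, S y -> 0 <= \sum_(j < n) (z ord0 j - p ord0 j) * (y ord0 j - z ord0 j).
  move=> y Sy.
  set Bv := \sum_(j < n) _.
  set W := \sum_(j < n) (y ord0 j - z ord0 j) ^+ 2.
  have W0 : 0 <= W by apply: sumr_ge0 => i _; exact: sqr_ge0.
  rewrite leNgt; apply/negP => Bneg.
  pose t := Num.min 1 (- Bv / (W + 1)).
  have W1 : 0 < W + 1 by lra.
  have t0 : 0 < t by rewrite lt_min ltr01 divr_gt0 // oppr_gt0.
  have t1 : t <= 1 by rewrite ge_min lexx.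
  have tW : t * (W + 1) <= - Bv.
    rewrite -ler_pdivlMr //; by rewrite ge_min lexx orbT.
  have := hseg y t Sy; rewrite t0 t1 => /(_ isT); rewrite hexp -/Bv -/W expr2 => h.
  nra.
have fz0 : 0 < f z.
  rewrite lt_def; apply/andP; split; last by apply: sumr_ge0 => i _; exact: sqr_ge0.
  apply/negP => /eqP fz.
  have zp : forall j, z ord0 j = p ord0 j.
    move=> j; have := hsq z j; rewrite fz => h.
    have : (z ord0 j - p ord0 j) ^+ 2 = 0 by apply/eqP; rewrite eq_le h sqr_ge0.
    by move/eqP; rewrite sqrf_eq0 subr_eq0 => /eqP.
  have hN : nbhs z [set u : 'rV[R]_n | forall j, `|u ord0 j - z ord0 j| < eps].
    apply: (@filter_forall _ 'I_n (fun j (u : 'rV[R]_n) => `|u ord0 j - z ord0 j| < eps) (nbhs z) _) => j.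
    have := @coord_continuous R 1 n ord0 j z (ball (z ord0 j) eps).
    move=> /(_ (nbhsx_ballx _ _ eps0)).
    move=> H; apply: (@filterS _ (nbhs z) _ _ _ _ H) => u /=.
    by rewrite /ball /= distrC.
  have [u [Ku Nu]] := proj1 zC _ hN.
  have [j hj] := hno' u Ku.
  by have := Nu j; rewrite zp ltNge hj.
have [y [Sy hy]] := hdual (z - p) (f z / 2) (divr_gt0 fz0 (ltr0Sn _ 1)).
have := hB y Sy.
have E : \sum_(j < n) (z - p) ord0 j * (y ord0 j - p ord0 j) =
  \sum_(j < n) (z ord0 j - p ord0 j) * (y ord0 j - z ord0 j) + f z.
  rewrite /f /sqd -big_split /=; apply: eq_bigr => j _; rewrite !mxE; ring.
rewrite E in hy.
lra.
Qed.
End Sep.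
Section Main.
Variables (R : realType) (B : lmodType R) (bf : B -> B -> R).
Hypothesis hbf : symmetric_bilinear bf.

Lemma conv_ext (A : set B) x a (t : R) : conv_hull A x -> A a -> 0 <= t <= 1 ->
  conv_hull A ((1 - t) *: x + t *: a).
Proof.
move=> [n [as_ [l [Aa [l0 [l1 ->]]]]]] Aa' /andP[t0 t1].
pose a2 (k : 'I_n.+1) := if unlift ord_max k is Some i then as_ i else a.
pose l2 (k : 'I_n.+1) := if unlift ord_max k is Some i then (1 - t) * l i else t.
have hw (i : 'I_n) : unlift ord_max (widen_ord (leqnSn n) i) = Some i.
  have -> : widen_ord (leqnSn n) i = lift ord_max i by apply/val_inj; rewrite /= /bump leqNgt ltn_ord.
  by rewrite liftK.
exists n.+1, a2, l2; split; [|split; [|split]].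
- by move=> k; rewrite /a2; case: (unlift _ _).
- move=> k; rewrite /l2; case: (unlift _ _) => [i|//].
  by apply: mulr_ge0 => //; rewrite subr_ge0.
- rewrite big_ord_recr /= /l2 unlift_none.
  under eq_bigr do rewrite hw.
  by rewrite -mulr_sumr l1 mulr1 subrK.
- rewrite big_ord_recr /= /l2 /a2 unlift_none.
  under [X in _ = X + _]eq_bigr do rewrite hw.
  by rewrite scaler_sumr; congr (_ + _); apply: eq_bigr => i _; rewrite scalerA.
Qed.

Lemma part2 (A : set B) (hA : q_positive bf A) :
  edom (PhiA_at bf A) `<=` convw bf A.
Proof.
move=> b hb U hU Ub.
have [cs [eps [eps0 hsub]]] := w_open_wnb hU Ub.
pose m := size cs.
pose T (x : B) : 'rV[R]_m := \row_(j < m) bf x (nth 0 cs j).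
have [a0 Aa0] := proj1 hA.
have hK0 : (T @` conv_hull A) (T a0).
  exists a0 => //; exists 1%N, (fun=> a0), (fun=> 1); split => //; split => //.
  by rewrite !big_ord1 scale1r.
have hext : forall u y t, (T @` conv_hull A) u -> (T @` A) y -> 0 <= t <= 1 ->
    (T @` conv_hull A) ((1 - t) *: u + t *: y).
  move=> _ _ t [x cx <-] [a Aa <-] ht.
  exists ((1 - t) *: x + t *: a); first exact: conv_ext.
  by apply/rowP => j; rewrite !mxE (bfDl hbf) !(bfZl hbf).
have hdual : forall (v : 'rV[R]_m) (eta : R), 0 < eta -> exists y : 'rV[R]_m, (T @` A) y /\
      \sum_(j < m) v ord0 j * (y ord0 j - T b ord0 j) <= eta.
  move=> v eta eta0.
  have [a [Aa ha]] := dual_cond hbf hA hb (- \sum_(j < m) v ord0 j *: nth 0 cs j) eta0.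
  exists (T a); split; first by exists a.
  have hneg x : bf x (- \sum_(j < m) v ord0 j *: nth 0 cs j) =
      - \sum_(j < m) v ord0 j * bf x (nth 0 cs j).
    rewrite (bfC hbf) (bfNl hbf) (bf_suml hbf); congr (- _).
    by apply: eq_bigr => j _; rewrite (bfC hbf).
  rewrite !hneg in ha.
  have -> : \sum_(j < m) v ord0 j * (T a ord0 j - T b ord0 j) =
    \sum_(j < m) v ord0 j * bf a (nth 0 cs j) - \sum_(j < m) v ord0 j * bf b (nth 0 cs j).
    by rewrite -sumrB; apply: eq_bigr => j _; rewrite !mxE mulrBr.
  lra.
have [_ [[x cx <-] hx]] := sep hK0 hext hdual eps0.
exists x; split => //; apply: hsub => c cin /=.
have hi : (index c cs < m)%N by rewrite index_mem.
have := hx (Ordinal hi).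
by rewrite !mxE /= nth_index.
Qed.
End Main.

Theorem mainTheorem9 (R : realType) (B : lmodType R) (bf : B -> B -> R)
  (hbf : symmetric_bilinear bf) (hB : exists b : B, b != 0)
  (A : set B) (hA : q_positive bf A) :
  conv_hull A `<=` edom (PhiA_at bf A) /\ edom (PhiA_at bf A) `<=` convw bf A.
Proof. split; [exact: part1 | exact: part2]. Qed.
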